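(* Let $S$ be a semidomain that is not an integral domain. Then the polynomials $x+1$, $x^2+x+1$, $x^3+1$, and $x^4+x^2+1$ are irreducible in $S[x]$.
   Context: A semidomain is a subset $S$ of an integral domain $R$ containing $0$ and $1$ and closed under addition and multiplication; $S$ is an integral domain precisely when it is also closed under additive inverses. $S[x]$ is the semidomain of polynomials in $R[x]$ with coefficients in $S$. An element $a\in S[x]\setminus\{0\}$ is irreducible if it is not a unit of the multiplicative monoid $S[x]\setminus\{0\}$ and $a=bc$ with $b,c\in S[x]\setminus\{0\}$ forces $b$ or $c$ to be a unit. *)

(* Defs.v *)
From mathcomp Require Import all_boot all_algebra.
Set Implicit Arguments. Unset Strict Implicit. Unset Printing Implicit Defensive.
Import GRing.Theory.
Local Open Scope ring_scope.

Definition semidomain (R : idomainType) (S : R -> Prop) : Prop :=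
  [/\ S 0, S 1,
      (forall a b, S a -> S b -> S (a + b)) &
      (forall a b, S a -> S b -> S (a * b))].

(* S is closed under additive inverses (i.e. S is an integral domain). *)
Definition closed_opp (R : idomainType) (S : R -> Prop) : Prop :=
  forall a, S a -> S (- a).

Definition inSx (R : idomainType) (S : R -> Prop) (p : {poly R}) : Prop :=
  forall i : nat, S p`_i.

Definition Sx_unit (R : idomainType) (S : R -> Prop) (p : {poly R}) : Prop :=
  [/\ inSx S p, p != 0 & exists q, [/\ inSx S q, q != 0 & p * q = 1]].

Definition Sx_irreducible (R : idomainType) (S : R -> Prop) (a : {poly R}) : Prop :=
  [/\ inSx S a, a != 0, ~ Sx_unit S a &
      forall b c, inSx S b -> b != 0 -> inSx S c -> c != 0 ->
        a = b * c -> Sx_unit S b \/ Sx_unit S c].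

(* Main.v *)
Require Import Defs.
From mathcomp Require Import all_boot all_algebra.
From mathcomp Require Import ring zify.
From Stdlib Require Import Classical.
Set Implicit Arguments. Unset Strict Implicit.
Import GRing.Theory.
Local Open Scope ring_scope.

Lemma cube3 (R : comPzRingType) (x y : R) : x * y = 1 -> x + y = 1 -> x ^+ 3 = -1.
Proof.
move=> h1 h2.
have e : x ^+ 3 + 1 = (x + 1) * (- (x * y - 1) + x * (x + y - 1)) by ring.
move: e; rewrite h1 h2 !subrr oppr0 mulr0 addr0 mulr0 => /eqP.
by rewrite addr_eq0 => /eqP.
Qed.

Lemma sum0N (R : zmodType) (x y : R) : x + y = 0 -> y = - x.
Proof. by move/eqP; rewrite addrC addr_eq0 => /eqP. Qed.

Lemma sub0E (R : zmodType) (x y : R) : x - y = 0 -> x = y.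
Proof. by move/eqP; rewrite subr_eq0 => /eqP. Qed.

Lemma size_mon (R : idomainType) (p : {poly R}) n :
  p`_n = 1 -> (forall k, (n < k)%N -> p`_k = 0) -> size p = n.+1 /\ p \is monic.
Proof.
move=> h1 h2.
have le : (size p <= n.+1)%N by apply/leq_sizeP => j hj; apply: h2.
have gt : (n < size p)%N.
  rewrite ltnNge; apply/negP => /(nth_default 0) hn.
  by move: h1; rewrite hn => /eqP; rewrite eq_sym oner_eq0.
have sz : size p = n.+1 by apply/eqP; rewrite eqn_leq le gt.
by split=> //; rewrite monicE /lead_coef sz /= h1.
Qed.

Lemma natS (R : idomainType) (S : R -> Prop) (b : bool) :
  semidomain S -> S b%:R.
Proof. by case=> S0 S1 _ _; case: b. Qed.

Lemma factor_monic (R : idomainType) (S : R -> Prop) (p b c : {poly R}) :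
  semidomain S -> p \is monic -> inSx S b -> b != 0 -> inSx S c -> c != 0 ->
  p = b * c -> ~ Sx_unit S b -> ~ Sx_unit S c ->
  exists b' c', [/\ inSx S b', inSx S c', b' \is monic, c' \is monic &
     [/\ p = b' * c', (1 < size b')%N, (1 < size c')%N &
         (size b' + size c' = (size p).+1)%N]].
Proof.
move=> [S0 S1 SD SM] mp Sb b0 Sc c0 Hp nub nuc.
have lbc : lead_coef b * lead_coef c = 1 by rewrite -lead_coefM -Hp; exact/monicP.
have Slb : S (lead_coef b) by apply: Sb.
have Slc : S (lead_coef c) by apply: Sc.
have lb0 : lead_coef b != 0 by rewrite lead_coef_eq0.
have lc0 : lead_coef c != 0 by rewrite lead_coef_eq0.
have sb : (1 < size b)%N.
  rewrite ltnNge; apply/negP => /size1_polyC Eb; apply: nub; split => //.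
  exists (lead_coef c)%:P; split.
  - by move=> i; rewrite coefC; case: eqP.
  - by rewrite polyC_eq0.
  - by move: lbc; rewrite Eb lead_coefC -polyCM => ->.
have sc : (1 < size c)%N.
  rewrite ltnNge; apply/negP => /size1_polyC Ec; apply: nuc; split => //.
  exists (lead_coef b)%:P; split.
  - by move=> i; rewrite coefC; case: eqP.
  - by rewrite polyC_eq0.
  - by move: lbc; rewrite Ec lead_coefC mulrC -polyCM => ->.
exists (lead_coef c *: b), (lead_coef b *: c); split.
- by move=> i; rewrite coefZ; apply: (SM).
- by move=> i; rewrite coefZ; apply: (SM).
- by rewrite monicE lead_coefZ mulrC lbc.
- by rewrite monicE lead_coefZ lbc.
split.
- by rewrite -scalerAl -scalerAr scalerA mulrC lbc scale1r.
- by rewrite size_scale.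
- by rewrite size_scale.
rewrite !size_scale // Hp size_mul //; lia.
Qed.

Lemma irr_gen (R : idomainType) (S : R -> Prop) (p : {poly R}) n :
  semidomain S -> (0 < n)%N -> p`_n = 1 -> (forall k, (n < k)%N -> p`_k = 0) -> inSx S p ->
  (forall b c, inSx S b -> inSx S c -> b \is monic -> c \is monic -> p = b * c ->
     (1 < size b)%N -> (1 < size c)%N -> (size b + size c = n.+2)%N -> False) ->
  Sx_irreducible S p.
Proof.
move=> sd n0 h1 h2 Sp H.
have [sz mp] := @size_mon _ p n h1 h2.
have p0 : p != 0 by exact: monic_neq0.
split => //.
- case=> _ _ [q [_ q0 pq]]; move: (congr1 (fun r : {poly R} => size r) pq).
  rewrite /= size_mul // size_poly1 sz => e.
  have : (0 < size q)%N by rewrite size_poly_gt0.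
  lia.
- move=> b c Sb b0 Sc c0 Hp.
  case: (classic (Sx_unit S b)) => ub; first by left.
  case: (classic (Sx_unit S c)) => uc; first by right.
  exfalso.
  have [b' [c' [Sb' Sc' mb mc [E s1 s2 s3]]]] := @factor_monic _ S p b c sd mp Sb b0 Sc c0 Hp ub uc.
  by apply: (H b' c') => //; rewrite s3 sz.
Qed.

Lemma lc_one (R : idomainType) (b : {poly R}) n :
  b \is monic -> size b = n.+1 -> b`_n = 1.
Proof. by move=> mb sb; rewrite -(monicP mb) /lead_coef sb. Qed.

Lemma hi_zero (R : idomainType) (b : {poly R}) n k :
  size b = n -> (n <= k)%N -> b`_k = 0.
Proof. by move=> sb hk; rewrite nth_default // sb. Qed.

Ltac coefeq Hp i :=
  have := congr1 (fun q : {poly _} => q`_i) Hp;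
  rewrite coefM !big_ord_recr big_ord0 /= !(subSS, subn0) add0r !coefD
          ?coefXn ?coefX ?coef1 /=.

Theorem lemma5p2 (R : idomainType) (S : R -> Prop) :
  semidomain S -> ~ closed_opp S ->
  [/\ Sx_irreducible S ('X + 1),
      Sx_irreducible S ('X^2 + 'X + 1),
      Sx_irreducible S ('X^3 + 1) &
      Sx_irreducible S ('X^4 + 'X^2 + 1)].
Proof.
move=> sd nc.
have [S0 S1 SD SM] := sd.
have nm1 : ~ S (-1).
  by move=> Sm1; apply: nc => a Sa; rewrite -mulN1r; apply: (SM).
split.
- apply: (@irr_gen _ _ _ 1) => //.
  + by rewrite coefD coefX coef1 /= ?addr0 ?add0r.
  + by move=> k; case: k => [|[|k]] //= _; rewrite coefD coefX coef1 /= ?addr0 ?add0r.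
  + by move=> i; rewrite coefD coefX coef1; apply: (SD); exact: natS.
  + move=> b c _ _ _ _ _ *; lia.
- apply: (@irr_gen _ _ _ 2) => //.
  + by rewrite !coefD coefXn coefX coef1 /= ?addr0 ?add0r.
  + by move=> k; case: k => [|[|[|k]]] //= _; rewrite !coefD coefXn coefX coef1 /= ?addr0 ?add0r.
  + by move=> i; rewrite !coefD coefXn coefX coef1; apply: (SD); first apply: (SD); exact: natS.
  + move=> b c Sb Sc mb mc Hp s1 s2 s3.
    have sb : size b = 2%N by lia.
    have sc : size c = 2%N by lia.
    have b1 := lc_one mb sb; have c1 := lc_one mc sc.
    have b2 := hi_zero sb (leqnn 2); have c2 := hi_zero sc (leqnn 2).
    coefeq Hp 0%N => e0; coefeq Hp 1%N => e1.
    rewrite ?b1 ?c1 ?b2 ?c2 ?(mulr1, mul1r, mulr0, mul0r, addr0, add0r) in e0 e1.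
    apply: nm1; rewrite -(cube3 (esym e0) (esym e1)) exprS expr2.
    by apply: (SM) => //; apply: (SM).
- apply: (@irr_gen _ _ _ 3) => //.
  + by rewrite !coefD coefXn coef1 /= ?addr0 ?add0r.
  + by move=> k; case: k => [|[|[|[|k]]]] //= _; rewrite !coefD coefXn coef1 /= ?addr0 ?add0r.
  + by move=> i; rewrite !coefD coefXn coef1; apply: (SD); apply: natS.
  + move=> b c Sb Sc mb mc Hp s1 s2 s3.
    have [[sb sc] | [sb sc]] : (size b = 2 /\ size c = 3 \/ size b = 3 /\ size c = 2)%N by lia.
    * have b1 := lc_one mb sb; have c2 := lc_one mc sc.
      have b2 := hi_zero sb (leqnn 2); have b3 := hi_zero sb (leqnSn 2).
      have c3 := hi_zero sc (leqnn 3).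
      coefeq Hp 0%N => e0; coefeq Hp 2%N => e2.
      rewrite ?b1 ?c2 ?b2 ?b3 ?c3 ?(mulr1, mul1r, mulr0, mul0r, addr0, add0r) in e0 e2.
      apply: nm1.
      have -> : -1 = c`_1 * c`_0.
        have -> : c`_1 * c`_0 = (b`_0 + c`_1) * c`_0 - b`_0 * c`_0 by ring.
        by rewrite -e2 -e0 mul0r sub0r.
      by apply: (SM).
    * have b2 := lc_one mb sb; have c1 := lc_one mc sc.
      have c2 := hi_zero sc (leqnn 2); have c3 := hi_zero sc (leqnSn 2).
      have b3 := hi_zero sb (leqnn 3).
      coefeq Hp 0%N => e0; coefeq Hp 2%N => e2.
      rewrite ?b2 ?c1 ?c2 ?b3 ?c3 ?(mulr1, mul1r, mulr0, mul0r, addr0, add0r) in e0 e2.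
      apply: nm1.
      have -> : -1 = b`_1 * b`_0.
        have -> : b`_1 * b`_0 = (b`_1 + c`_0) * b`_0 - b`_0 * c`_0 by ring.
        by rewrite -e2 -e0 mul0r sub0r.
      by apply: (SM).
- apply: (@irr_gen _ _ _ 4) => //.
  + by rewrite !coefD !coefXn coef1 /= ?addr0 ?add0r.
  + by move=> k; case: k => [|[|[|[|[|k]]]]] //= _; rewrite !coefD !coefXn coef1 /= ?addr0 ?add0r.
  + by move=> i; rewrite !coefD !coefXn coef1; apply: (SD); first apply: (SD); exact: natS.
  + move=> b c Sb Sc mb mc Hp s1 s2 s3.
    have [[sb sc] | [[sb sc] | [sb sc]]] : (size b = 2 /\ size c = 4 \/ size b = 3 /\ size c = 3 \/ size b = 4 /\ size c = 2)%N by lia.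
    * have b1 := lc_one mb sb; have c3 := lc_one mc sc.
      have b2 : b`_2 = 0 by apply: (hi_zero sb).
      have b3 : b`_3 = 0 by apply: (hi_zero sb).
      coefeq Hp 0%N => e0; coefeq Hp 3%N => e3.
      rewrite ?b1 ?c3 ?b2 ?b3 ?(mulr1, mul1r, mulr0, mul0r, addr0, add0r) in e0 e3.
      apply: nm1.
      have -> : -1 = c`_2 * c`_0.
        have -> : c`_2 * c`_0 = (b`_0 + c`_2) * c`_0 - b`_0 * c`_0 by ring.
        by rewrite -e3 -e0 mul0r sub0r.
      by apply: (SM).
    * have b2 := lc_one mb sb; have c2 := lc_one mc sc.
      have b3 : b`_3 = 0 by apply: (hi_zero sb).
      have c3 : c`_3 = 0 by apply: (hi_zero sc).
      coefeq Hp 0%N => e0; coefeq Hp 1%N => e1; coefeq Hp 2%N => e2; coefeq Hp 3%N => e3.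
      rewrite ?b2 ?c2 ?b3 ?c3 ?(mulr1, mul1r, mulr0, mul0r, addr0, add0r) in e0 e1 e2 e3.
      have ec1 : c`_1 = - b`_1 := sum0N (esym e3).
      case: (eqVneq (b`_1) 0) => [hb1|hb1].
      - have e2' : b`_0 + c`_0 = 1 by move: e2; rewrite hb1 mul0r addr0 => <-.
        apply: nm1; rewrite -(cube3 (esym e0) e2') exprS expr2.
        by apply: (SM) => //; apply: (SM).
      - have h : b`_1 * (c`_0 - b`_0) = 0.
          have -> : b`_1 * (c`_0 - b`_0) = b`_0 * c`_1 + b`_1 * c`_0 by rewrite ec1; ring.
          by rewrite -e1.
        move/eqP: h; rewrite mulf_eq0 (negbTE hb1) /= => /eqP /sub0E ec0.
        have h2 : (b`_0 - 1) * (b`_0 + 1) = 0.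
          have -> : (b`_0 - 1) * (b`_0 + 1) = b`_0 * c`_0 - 1 by rewrite ec0; ring.
          by rewrite -e0 subrr.
        move/eqP: h2; rewrite mulf_eq0 => /orP [/eqP /sub0E hb0 | ].
        + apply: nm1.
          have -> : -1 = b`_1 * c`_1.
            rewrite [RHS](_ : _ = (b`_0 + b`_1 * c`_1 + c`_0) - b`_0 - c`_0); last by ring.
            rewrite -e2 ec0 hb0; ring.
          by apply: (SM).
        + rewrite addr_eq0 => /eqP hb0.
          by apply: nm1; rewrite -hb0.
    * have b3 := lc_one mb sb; have c1 := lc_one mc sc.
      have c2 : c`_2 = 0 by apply: (hi_zero sc).
      have c3 : c`_3 = 0 by apply: (hi_zero sc).
      coefeq Hp 0%N => e0; coefeq Hp 3%N => e3.
      rewrite ?b3 ?c1 ?c2 ?c3 ?(mulr1, mul1r, mulr0, mul0r, addr0, add0r) in e0 e3.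
      apply: nm1.
      have -> : -1 = b`_2 * b`_0.
        have -> : b`_2 * b`_0 = (b`_2 + c`_0) * b`_0 - b`_0 * c`_0 by ring.
        by rewrite -e3 -e0 mul0r sub0r.
      by apply: (SM).
Qed.
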